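(* Let $G$ be a finite simple graph. Then $G$ has no edges if and only if its chromatic symmetric function $X_G$ belongs to $\Gamma$.
   Context: For a finite simple graph $G=(V,E)$ with $V=\{v_1,\dots,v_n\}$, a proper coloring is a map $\kappa:V\to\{1,2,\dots\}$ with $\kappa(v_i)\neq\kappa(v_j)$ whenever $\{v_i,v_j\}\in E$. The chromatic symmetric function is $X_G=\sum_\kappa x_{\kappa(v_1)}\cdots x_{\kappa(v_n)}$, summed over all proper colorings. Let $p_r=\sum_i x_i^r$ be the power sum symmetric functions and $\Gamma=\mathbb{Q}[p_1,p_3,p_5,\dots]$ the subalgebra of the algebra $\Lambda$ of symmetric functions generated by the odd power sums. *)

(* Defs.v *)
From HB Require Import structures.
From mathcomp Require Import all_boot all_order all_algebra.
Set Implicit Arguments. Unset Strict Implicit. Unset Printing Implicit Defensive.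
Import Order.TTheory GRing.Theory Num.Theory.
Local Open Scope ring_scope.

(* Formal power series over Q in the countably many variables x_0, x_1, ...
   (colours are indexed from 0 instead of 1).  A monomial is given by an
   exponent function a : 'I_m -> nat for some m, denoting
   x_0^(a 0) * ... * x_(m-1)^(a (m-1)); every monomial arises this way
   (the same monomial may also be given with extra trailing zero exponents).
   A series is its coefficient function. *)
Definition fps := forall m : nat, ('I_m -> nat) -> rat.

Definition simple_graph (V : finType) (e : rel V) : Prop :=
  symmetric e /\ irreflexive e.

Definition proper_col (V : finType) (e : rel V) m (k : {ffun V -> 'I_m}) : bool :=
  [forall x, forall y, e x y ==> (k x != k y)].

(* Chromatic symmetric function X_G: the coefficient of x^a is the number of
   proper colourings kappa with #{v | kappa v = i} = a i for all i
   (such colourings only use colours < m). *)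
Definition chromsym (V : finType) (e : rel V) : fps := fun m a =>
  (#|[pred k : {ffun V -> 'I_m} | proper_col e k &&
       [forall i, #|[pred v | k v == i]| == a i]]|)%:R.

(* Product of power sums p_lam = p_(lam_0) * ... * p_(lam_(l-1)) for a list
   lam of positive integers: expanding the product, each factor p_(lam_j)
   contributes x_(f j)^(lam_j); the coefficient of x^a is the number of
   f with sum_(j | f j = i) lam_j = a i for all i. *)
Definition psum_prod (lam : seq nat) : fps := fun m a =>
  (#|[pred f : {ffun 'I_(size lam) -> 'I_m} |
       [forall i, (\sum_(j < size lam | f j == i) nth 0%N lam j)%N == a i]]|)%:R.

(* Gamma = Q[p_1, p_3, p_5, ...]: the Q-span of the products of odd power sums
   (the empty product being 1). *)
Definition in_Gamma (F : fps) : Prop :=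
  exists c : seq (rat * seq nat),
    all (fun q => all odd q.2) c /\
    forall m (a : 'I_m -> nat), F m a = \sum_(q <- c) q.1 * psum_prod q.2 a.

(* Main.v *)
Require Import Defs.
From HB Require Import structures.
From mathcomp Require Import all_boot all_order all_algebra.
From mathcomp Require Import zify.
Set Implicit Arguments. Unset Strict Implicit. Unset Printing Implicit Defensive.

Section Cancel.
Variables (D : finType) (m : nat) (c0 c1 : 'I_m) (w : D -> nat).
Hypothesis hc : c0 != c1.
Hypothesis hw : forall j, odd (w j).

Definition fsum (f : {ffun D -> 'I_m}) i := (\sum_(j | f j == i) w j)%N.
Definition fl (c : 'I_m) := if c == c0 then c1 else if c == c1 then c0 else c.
Definition iot (f : {ffun D -> 'I_m}) : {ffun D -> 'I_m} :=
  if [pick j | (f j == c0) || (f j == c1)] is Some j0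
  then [ffun j => if j == j0 then fl (f j) else f j] else f.

Lemma fl_in c : (fl c == c0) || (fl c == c1) = (c == c0) || (c == c1).
Proof.
rewrite /fl; case: (eqVneq c c0) => [_|h0]; first by rewrite eqxx orbT.
case: (eqVneq c c1) => [_|h1]; first by rewrite eqxx.
by rewrite (negbTE h0) (negbTE h1).
Qed.

Lemma flK c : fl (fl c) = c.
Proof.
rewrite /fl; case: (eqVneq c c0) => [->|h0]; first by rewrite eq_sym (negbTE hc) eqxx.
case: (eqVneq c c1) => [->|h1]; first by rewrite eqxx.
by rewrite (negbTE h0) (negbTE h1).
Qed.

Lemma iotK : cancel iot iot.
Proof.
move=> f; rewrite /iot; case E: [pick j | (f j == c0) || (f j == c1)] => [j0|]; last by rewrite E.
have Hj0 : (f j0 == c0) || (f j0 == c1) by move: E; case: pickP => // j1 H [<-].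
set g := [ffun j => _].
have Eg : (fun j => (g j == c0) || (g j == c1)) =1 (fun j => (f j == c0) || (f j == c1)).
  by move=> j; rewrite /g ffunE; case: (j == j0) => //; rewrite fl_in.
rewrite (eq_pick Eg) E; apply/ffunP => j; rewrite !ffunE.
by case: (eqVneq j j0) => // ->; rewrite flK.
Qed.

Definition Qp f := [forall i, ((i != c0) && (i != c1)) ==> (fsum f i == 1)] &&
  (fsum f c0 + fsum f c1 == 2).

Lemma fsum_flip (f : {ffun D -> 'I_m}) j0 i :
  fsum [ffun j => if j == j0 then fl (f j) else f j] i + (if f j0 == i then w j0 else 0) =
  fsum f i + (if fl (f j0) == i then w j0 else 0).
Proof.
rewrite /fsum big_mkcond [in RHS]big_mkcond (bigD1 j0) //= [in RHS](bigD1 j0) //= ffunE eqxx.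
have -> : \sum_(j | j != j0) (if [ffun j => if j == j0 then fl (f j) else f j] j == i then w j else 0)
   = \sum_(j | j != j0) (if f j == i then w j else 0).
  by apply: eq_bigr => j hj; rewrite ffunE (negbTE hj).
lia.
Qed.

Lemma iot_Q f : Qp f -> Qp (iot f) && (odd (fsum (iot f) c1) == ~~ odd (fsum f c1)).
Proof.
move=> /andP[/forallP HQ /eqP Hs].
rewrite /iot; case E: [pick j | (f j == c0) || (f j == c1)] => [j0|]; last first.
  move: E; case: pickP => // Hn _.
  have Z : forall c, (c == c0) || (c == c1) -> fsum f c = 0.
    move=> c Hc; rewrite /fsum big_pred0 // => j.
    apply/negbTE/eqP => Hj; move: (Hn j); rewrite Hj.
    by case/orP: Hc => /eqP ->; rewrite eqxx ?orbT.
  by move: Hs; rewrite !Z ?eqxx ?orbT.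
have Hj0 : (f j0 == c0) || (f j0 == c1) by move: E; case: pickP => // j1 H [<-].
set g := [ffun j => _].
have F := fsum_flip f j0; rewrite -/g in F.
have [hA [hB hC]] : (forall i, i != c0 -> i != c1 -> fsum g i = fsum f i) /\
   (fsum g c0 + fsum g c1 = fsum f c0 + fsum f c1) /\
   (odd (fsum g c1) = ~~ odd (fsum f c1)).
  have hw0 := hw j0.
  have hc' : c1 != c0 by rewrite eq_sym.
  have fl0 : fl c0 = c1 by rewrite /fl eqxx.
  have fl1 : fl c1 = c0 by rewrite /fl eq_sym (negbTE hc) eqxx.
  case/orP: Hj0 => /eqP Hf; rewrite Hf ?fl0 ?fl1 in F.
    have F0 := F c0; have F1 := F c1.
    rewrite ?eqxx ?(negbTE hc) ?(negbTE hc') in F0 F1.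
    split; [move=> i h0 h1; have := F i; rewrite (eq_sym c0) (eq_sym c1) (negbTE h0) (negbTE h1); lia|].
    split; first lia.
    have -> : fsum g c1 = fsum f c1 + w j0 by lia.
    by rewrite oddD hw0 addbT.
  have F0 := F c0; have F1 := F c1.
  rewrite ?eqxx ?(negbTE hc) ?(negbTE hc') in F0 F1.
  split; [move=> i h0 h1; have := F i; rewrite (eq_sym c0) (eq_sym c1) (negbTE h0) (negbTE h1); lia|].
  split; first lia.
  have -> : fsum f c1 = fsum g c1 + w j0 by lia.
  by rewrite oddD hw0 addbT negbK.
apply/andP; split; last by rewrite hC.
apply/andP; split; last by rewrite hB Hs.
apply/forallP => i; apply/implyP => /andP[h0 h1].
by rewrite hA //; have := HQ i; rewrite h0 h1.
Qed.


Lemma card_flip : #|[pred f | Qp f && ~~ odd (fsum f c1)]| = #|[pred f | Qp f && odd (fsum f c1)]|.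
Proof.
rewrite -(card_image (can_inj iotK)); apply: eq_card => g; apply/imageP/idP.
  case=> f; rewrite !inE => /andP[Hq Ho] ->.
  by have /andP[Hq' /eqP Ho'] := iot_Q Hq; rewrite Hq' Ho'.
rewrite inE => /andP[Hq Ho]; exists (iot g); last by rewrite iotK.
by have /andP[Hq' /eqP Ho'] := iot_Q Hq; rewrite inE Hq' Ho' Ho.
Qed.

Definition avec (x y : nat) (i : 'I_m) : nat := if i == c0 then x else if i == c1 then y else 1.

Lemma memA x y f : x + y = 2 -> [forall i, fsum f i == avec x y i] = Qp f && (fsum f c1 == y).
Proof.
move=> hxy; have hc' : c1 != c0 by rewrite eq_sym.
apply/forallP/andP.
  move=> H; have H0 := eqP (H c0); have H1 := eqP (H c1).
  rewrite /avec eqxx in H0; rewrite /avec eqxx (negbTE hc') in H1.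
  split; last by rewrite H1.
  apply/andP; split; last by rewrite H0 H1 hxy.
  apply/forallP => i; apply/implyP => /andP[h0 h1].
  by have := H i; rewrite /avec (negbTE h0) (negbTE h1).
case=> /andP[/forallP HQ /eqP Hs] /eqP H1 i.
rewrite /avec; case: (eqVneq i c0) => [->|h0]; first by apply/eqP; lia.
case: (eqVneq i c1) => [->|h1]; first by rewrite H1.
by have := HQ i; rewrite h0 h1.
Qed.

Lemma Qp_le f : Qp f -> fsum f c1 <= 2.
Proof. by case/andP => _ /eqP; lia. Qed.

Lemma decomp (P : pred {ffun D -> 'I_m}) :
  #|[pred f | P f && [forall i, fsum f i == avec 2 0 i]]| +
  #|[pred f | P f && [forall i, fsum f i == avec 0 2 i]]| =
  #|[pred f | P f && (Qp f && ~~ odd (fsum f c1))]|.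
Proof.
rewrite -cardUI (@eq_card0 _ [predI _ & _]) ?addn0.
  apply: eq_card => f; rewrite !inE !memA //.
  case: (P f) => //=; case Hq: (Qp f) => //=; have := Qp_le Hq.
  by case: (fsum f c1) => [|[|[|n]]].
move=> f; rewrite !inE !memA //.
case: (P f) => //=; case Hq: (Qp f) => //=.
by case: (fsum f c1) => [|[|[|n]]].
Qed.

Lemma decomp1 (P : pred {ffun D -> 'I_m}) :
  #|[pred f | P f && [forall i, fsum f i == avec 1 1 i]]| =
  #|[pred f | P f && (Qp f && odd (fsum f c1))]|.
Proof.
apply: eq_card => f; rewrite !inE !memA //.
case: (P f) => //=; case Hq: (Qp f) => //=; have := Qp_le Hq.
by case: (fsum f c1) => [|[|[|n]]].
Qed.

End Cancel.

Import GRing.Theory Num.Theory.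
Local Open Scope ring_scope.

Lemma card_preim (T1 T2 : finType) (h : T1 -> T2) (hi : T2 -> T1) :
  cancel h hi -> cancel hi h -> forall P : pred T2, #|[pred x | P (h x)]| = #|P|.
Proof.
move=> hK hiK P; rewrite -(card_image (can_inj hK)); apply: eq_card => y.
apply/imageP/idP => [[x Hx ->] //|Hy]; exists (hi y); last by rewrite hiK.
by rewrite inE hiK.
Qed.

Lemma fib_bij (D1 D2 : finType) (h : D1 -> D2) (hi : D2 -> D1) :
  cancel h hi -> cancel hi h -> forall m (a : 'I_m -> nat),
  #|[pred k : {ffun D2 -> 'I_m} | [forall i, #|[pred v | k v == i]| == a i]]| =
  #|[pred f : {ffun D1 -> 'I_m} | [forall i, #|[pred j | f j == i]| == a i]]|.
Proof.
move=> hK hiK m a.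
rewrite -(@card_preim _ _ (fun f : {ffun D1 -> 'I_m} => [ffun v => f (hi v)])
   (fun k => [ffun j => k (h j)])); last 2 first.
- by move=> f; apply/ffunP => j; rewrite !ffunE hK.
- by move=> k; apply/ffunP => j; rewrite !ffunE hiK.
apply: eq_card => f; rewrite !inE; apply: eq_forallb => i.
rewrite (@eq_card _ _ [pred v | f (hi v) == i]); last by move=> v; rewrite !inE ffunE.
by rewrite (@card_preim _ _ hi h hiK hK [pred j | f j == i]).
Qed.

Lemma fsum1 (D : finType) m (k : {ffun D -> 'I_m}) i :
  fsum (fun _ => 1%N) k i = #|[pred v | k v == i]|.
Proof. by rewrite /fsum sum1dep_card; apply: eq_card => v; rewrite inE. Qed.

Lemma psum_cancel lam m (c0 c1 : 'I_m) : c0 != c1 -> all odd lam ->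
  psum_prod lam (avec c0 c1 2%N 0%N) + psum_prod lam (avec c0 c1 0%N 2%N) =
  psum_prod lam (avec c0 c1 1%N 1%N) :> rat.
Proof.
move=> hc hodd; rewrite /psum_prod -natrD; congr (_%:R)%R.
pose w := fun j : 'I_(size lam) => nth 0%N lam j.
have hw : forall j, odd (w j) by move=> j; apply: (allP hodd); apply: mem_nth.
have E : forall a, #|[pred f : {ffun 'I_(size lam) -> 'I_m} |
    [forall i, (\sum_(j < size lam | f j == i) nth 0%N lam j)%N == a i]]| =
   #|[pred f | predT f && [forall i, fsum w f i == a i]]| by move=> a; apply: eq_card.
rewrite !E (decomp w hc) (decomp1 w hc).
rewrite (@eq_card _ _ [pred f | Qp c0 c1 w f && ~~ odd (fsum w f c1)]) //.
rewrite [in RHS](@eq_card _ _ [pred f | Qp c0 c1 w f && odd (fsum w f c1)]) //.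
exact: (card_flip hc hw).
Qed.
Lemma chrom_eq (V : finType) (e : rel V) m a : chromsym e (a : 'I_m -> nat) =
  (#|[pred k : {ffun V -> 'I_m} | proper_col e k &&
      [forall i, fsum (fun _ => 1%N) k i == a i]]|)%:R.
Proof.
rewrite /chromsym; congr (_%:R); apply: eq_card => k; rewrite !inE; congr (_ && _).
by apply: eq_forallb => i; rewrite fsum1.
Qed.

Lemma fib1_inj (V : finType) m (k : {ffun V -> 'I_m}) :
  (forall i, #|[pred v | k v == i]| = 1%N) -> injective k.
Proof.
move=> H u v Euv; apply/eqP; apply/negPn/negP => Huv.
suff /subset_leq_card : pred2 u v \subset [pred z | k z == k u] by rewrite card2 Huv H.
apply/subsetP => z.
by rewrite !inE => /orP[/eqP->|/eqP->]; rewrite ?Euv eqxx.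
Qed.

Unset Implicit Arguments.

Theorem mainTheorem1 (V : finType) (e : rel V) (hG : simple_graph e) :
  (forall x y : V, ~~ e x y) <-> in_Gamma (chromsym e).
Proof.
case: hG => hsym hirr.
split.
  move=> H; exists [:: (1%R, nseq #|V| 1%N)]; split.
    by rewrite /= andbT all_nseq orbT.
  move=> m a; rewrite big_seq1 mul1r /chromsym /psum_prod; congr (_%:R)%R.
  rewrite (@eq_card _ _ [pred k : {ffun V -> 'I_m} | [forall i, #|[pred v | k v == i]| == a i]]); last first.
    move=> k; rewrite !inE.
    have -> // : proper_col e k.
    by apply/forallP=> u; apply/forallP=> v; rewrite (negbTE (H u v)).
  rewrite [in RHS](@eq_card _ _ [pred f : {ffun 'I_(size (nseq #|V| 1%N)) -> 'I_m} |
     [forall i, #|[pred j | f j == i]| == a i]]); last first.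
    move=> f; rewrite !inE; apply: eq_forallb => i; rewrite -fsum1 /fsum; congr (_ == _).
    apply: eq_bigr => j _; rewrite nth_nseq (_ : (j < #|V|)%N = true) //.
    by apply: leq_trans (ltn_ord j) _; rewrite size_nseq.
  apply: (@fib_bij _ _ (fun j => enum_val (cast_ord (size_nseq #|V| 1%N) j))
     (fun v => cast_ord (esym (size_nseq #|V| 1%N)) (enum_rank v))).
    by move=> j /=; rewrite enum_valK cast_ordK.
  by move=> v /=; rewrite cast_ordKV enum_rankK.
case=> c [hodd Hc] x y; apply/negP => Exy.
have hxy : x != y by apply: contraTneq Exy => ->; rewrite hirr.
pose c0 := enum_rank x; pose c1 := enum_rank y.
have hc : c0 != c1 by rewrite /c0 /c1 (inj_eq enum_rank_inj).
have Hsum : chromsym e (avec c0 c1 2%N 0%N) + chromsym e (avec c0 c1 0%N 2%N)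
   = chromsym e (avec c0 c1 1%N 1%N).
  rewrite !Hc -big_split /=; apply: eq_big_seq => q hq.
  by rewrite -mulrDr psum_cancel //; apply: (allP hodd q hq).
rewrite !chrom_eq -natrD in Hsum; move/eqP: Hsum; rewrite eqr_nat => /eqP Hsum.
pose w1 := fun _ : V => 1%N.
have hw1 : forall j, odd (w1 j) by [].
rewrite (decomp w1 hc) (decomp1 w1 hc) in Hsum.
have Hodd : #|[pred f | proper_col e f && (Qp c0 c1 w1 f && odd (fsum w1 f c1))]| =
    #|[pred f | Qp c0 c1 w1 f && odd (fsum w1 f c1)]|.
  apply: eq_card => f; rewrite !inE; case Hq: (Qp c0 c1 w1 f); last by rewrite /= andbF.
  case Ho: (odd _); rewrite /= ?andbT; last by rewrite andbF.
  have Hf : forall i, fsum w1 f i = 1%N.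
    have : [forall i, fsum w1 f i == avec c0 c1 1%N 1%N i].
      rewrite (memA w1 hc) // Hq /=; have := Qp_le hc Hq; move: Ho.
      by case: (fsum w1 f c1) => [|[|[|n]]].
    move/forallP => H i; move: (H i) => /eqP ->; rewrite /avec; by case: (i == c0); case: (i == c1).
  have inj : injective f by apply: fib1_inj => i; rewrite -fsum1 Hf.
  apply/forallP => u; apply/forallP => v; apply/implyP => Euv.
  by apply/negP => /eqP/inj Huv; rewrite Huv hirr in Euv.
have Hlt : (#|[pred f | proper_col e f && (Qp c0 c1 w1 f && ~~ odd (fsum w1 f c1))]| <
    #|[pred f | Qp c0 c1 w1 f && ~~ odd (fsum w1 f c1)]|)%N.
  apply: proper_card; apply/properP; split.
    by apply/subsetP => f; rewrite !inE => /andP[_ ->].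
  pose k0 : {ffun V -> 'I_#|V|} := [ffun v => enum_rank v].
  have Hk0 : forall i, fsum w1 k0 i = 1%N.
    move=> i; rewrite fsum1 -(card1 (enum_val i)); apply: eq_card => v.
    by rewrite !inE ffunE -(inj_eq enum_rank_inj) enum_valK.
  have Hq : Qp c0 c1 w1 k0.
    apply/andP; split; last by rewrite !Hk0.
    by apply/forallP => i; rewrite Hk0 eqxx implybT.
  have /andP[Hq' /eqP Ho'] := iot_Q hc hw1 Hq.
  exists (iot c0 c1 k0); first by rewrite inE Hq' Ho' Hk0.
  rewrite inE negb_and; apply/orP; left.
  move: Ho'; rewrite /iot; case E: [pick j | (k0 j == c0) || (k0 j == c1)] => [j0|]; last first.
    by case: (odd _).
  move=> _.
  have Hj0 : (k0 j0 == c0) || (k0 j0 == c1) by move: E; case: pickP => // j1 Hj [<-].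
  apply/negP => /forallP/(_ x)/forallP/(_ y); rewrite Exy /= !ffunE.
  have hyx : y != x by rewrite eq_sym.
  rewrite ffunE /c0 /c1 !(inj_eq enum_rank_inj) in Hj0.
  rewrite /fl /c0 /c1.
  by case/orP: Hj0 => /eqP ->; rewrite ?eqxx ?(inj_eq enum_rank_inj) ?(negbTE hxy) ?(negbTE hyx) ?eqxx.
rewrite (card_flip hc hw1) -Hodd -Hsum in Hlt.
by rewrite ltnn in Hlt.
Qed.
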